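(* Let $(X^t)_{t\ge 0}$ be the random walk on $G_{m,n}$ started at the identity and driven by the OST shuffle $OST_{m,n}$, and let $Y^t=(X^t)^{-1}$. For $j\in[n]$, let $T_j$ be the first time at which position $j$ is selected on the first draw of the shuffle (i.e. the first step in which the chosen index $j$ equals the given $j$). If $T_j\le t$, then $(Y^t)$ satisfies property $\mathcal{P}_j$ at time $t$, namely \[\mathbb{P}\bigl(Y^t(j)=x \mid Y^t(i)\text{ for all } j<i\le n\bigr)=\begin{cases}\frac{1}{mj}, & x\in\mathcal{G}^t_j,\\ 0,&\text{otherwise,}\end{cases}\] where $\mathcal{G}^t_j=\{\xi^k i: i\in[n],k\in\mathbb{Z}_m\}\setminus\{Y^t(\xi^k i): j<i\le n,\ k\in\mathbb{Z}_m\}$.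
   Context: Let $\xi$ be a primitive $m$-th root of unity and $[n]=\{1,\dots,n\}$. The generalized symmetric group $G_{m,n}$ is the group of bijections $\varphi$ of $\{\xi^k i: i\in[n],k\in\mathbb{Z}_m\}$ with $\varphi(\xi^k i)=\xi^k\varphi(i)$; equivalently tuples $(\xi^{k_1},\dots,\xi^{k_n},\sigma)$, $\sigma\in S_n$, acting by $i\mapsto \xi^{k_i}\sigma(i)$, with multiplication $(\xi^{k_1},\dots,\xi^{k_n},\sigma)(\xi^{k_1'},\dots,\xi^{k_n'},\sigma')=(\xi^{k_1}\xi^{k'_{\sigma(1)}},\dots,\xi^{k_n}\xi^{k'_{\sigma(n)}},\sigma\sigma')$. Elements are interpreted as arrangements of a deck of $n$ cards, each in one of $m$ orientations. For $1\le i\le j\le n$, $k\in\mathbb{Z}_m$, let $g_{i,j,k}$ have permutation part the transposition $(ij)$ (identity if $i=j$) and tuple with $\xi^k$ in positions $i$ and $j$ and $1$ elsewhere. One step of the OST shuffle: choose $j$ uniformly in $[n]$ (the ''first draw''), then $i$ uniformly in $[j]$, and $k$ uniformly in $\mathbb{Z}_m$, independently, and multiply by $g_{i,j,k}$; so each triple has probability $\frac{1}{njm}$. For $\varphi\in G_{m,n}$ one writes $\varphi(\xi^k i)=\xi^k\varphi(i)$. *)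

(* Defs.v *)
From mathcomp Require Import all_boot all_order all_algebra all_fingroup.
Set Implicit Arguments. Unset Strict Implicit. Unset Printing Implicit Defensive.
Import Order.TTheory GRing.Theory Num.Theory.

(* Conventions: the paper's index i in [n] = {1..n} is the ordinal i-1 : 'I_n;
   the exponent k in Z_m is an ordinal k : 'I_m (arithmetic mod m).
   A point xi^k i of {xi^k i} is the pair (i, k) : 'I_n * 'I_m. *)

Section Defs.
Variables n m : nat.

Lemma ord_pos (a : 'I_m) : 0 < m.
Proof. exact: leq_ltn_trans (leq0n a) (ltn_ord a). Qed.

Definition oadd (a b : 'I_m) : 'I_m := Ordinal (ltn_pmod (a + b) (ord_pos a)).
Definition oopp (a : 'I_m) : 'I_m := Ordinal (ltn_pmod (m - a) (ord_pos a)).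
Definition ozero (hm : 0 < m) : 'I_m := Ordinal hm.

Definition point := ('I_n * 'I_m)%type.

(* elements (xi^{k_1},...,xi^{k_n}, sigma) of G_{m,n} *)
Definition gsym := ({ffun 'I_n -> 'I_m} * {perm 'I_n})%type.

Definition gapp (a : gsym) (p : point) : point := (a.2 p.1, oadd p.2 (a.1 p.1)).

(* multiplication, exactly the paper's formula; in mathcomp (s * t) i = t (s i),
   which is the composition convention forced by the paper's formula. *)
Definition gmul (a b : gsym) : gsym :=
  ([ffun i => oadd (a.1 i) (b.1 (a.2 i))], (a.2 * b.2)%g).

Definition ginv (a : gsym) : gsym :=
  ([ffun i => oopp (a.1 ((a.2)^-1%g i))], (a.2)^-1%g).

Definition gid (hm : 0 < m) : gsym := ([ffun _ => ozero hm], 1%g).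

Definition gen (i j : 'I_n) (k : 'I_m) : gsym :=
  ([ffun l => if (l == i) || (l == j) then k else ozero (ord_pos k)], tperm i j).

(* one step of the shuffle: ((j, i), k) = (first draw, second draw, orientation) *)
Definition step := ('I_n * 'I_n * 'I_m)%type.

Definition step_gen (s : step) : gsym := gen s.1.2 s.1.1 s.2.

Definition step_weight (s : step) : rat :=
  if (s.1.2 <= s.1.1)%N then (1 / (n * (s.1.1).+1 * m)%:R)%R else 0%R.

Definition path_weight (t : nat) (w : t.-tuple step) : rat :=
  (\prod_(s <- w) step_weight s)%R.

Definition Prob (t : nat) (E : pred (t.-tuple step)) : rat :=
  (\sum_(w : t.-tuple step | E w) path_weight w)%R.

Definition walkX (hm : 0 < m) (w : seq step) : gsym :=
  foldl (fun X s => gmul X (step_gen s)) (gid hm) w.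

Definition walkY (hm : 0 < m) (w : seq step) : gsym := ginv (walkX hm w).

(* T_j: first time (steps numbered 1,2,...) whose first draw equals j;
   equals size w + 1 (i.e. > t) if j is never drawn first within the horizon. *)
Definition hitT (j : 'I_n) (w : seq step) : nat :=
  (find (fun s : step => s.1.1 == j) w).+1.

(* G_j^t, computed from the values y i = Y^t(i) for i > j, using
   Y^t(xi^k i) = xi^k Y^t(i) *)
Definition rot (k : 'I_m) (p : point) : point := (p.1, oadd k p.2).

Definition Gset (j : 'I_n) (y : {ffun 'I_n -> point}) : {set point} :=
  [set p : point | [forall i : 'I_n, forall k : 'I_m,
                      (j < i) ==> (p != rot k (y i))]].

End Defs.

(* Main.v *)
Require Import Defs.
From mathcomp Require Import all_boot all_order all_algebra all_fingroup.
From mathcomp Require Import ring.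
Set Implicit Arguments. Unset Strict Implicit. Unset Printing Implicit Defensive.
Import Order.TTheory GRing.Theory Num.Theory.

Section Arith.
Variables (m : nat) (hm : 0 < m).
Local Notation z := (ozero hm).

Lemma oaddE (a b : 'I_m) : val (oadd a b) = (a + b) %% m. Proof. by []. Qed.
Lemma ooppE (a : 'I_m) : val (oopp a) = (m - a) %% m. Proof. by []. Qed.

Lemma oaddC (a b : 'I_m) : oadd a b = oadd b a.
Proof. by apply: val_inj; rewrite /= addnC. Qed.
Lemma oaddA (a b c : 'I_m) : oadd a (oadd b c) = oadd (oadd a b) c.
Proof. by apply: val_inj; rewrite /= modnDml modnDmr addnA. Qed.
Lemma oadd0l (a : 'I_m) : oadd z a = a.
Proof. by apply: val_inj; rewrite /= add0n modn_small. Qed.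
Lemma oadd0r (a : 'I_m) : oadd a z = a.
Proof. by rewrite oaddC oadd0l. Qed.
Lemma oaddN (a : 'I_m) : oadd a (oopp a) = z.
Proof.
apply: val_inj; rewrite /= modnDmr subnKC ?modnn //.
exact: ltnW (ltn_ord a).
Qed.
Lemma oaddNl (a : 'I_m) : oadd (oopp a) a = z.
Proof. by rewrite oaddC oaddN. Qed.
Lemma oaddKl (a b : 'I_m) : oadd (oopp a) (oadd a b) = b.
Proof. by rewrite oaddA oaddNl oadd0l. Qed.
Lemma oaddNKl (a b : 'I_m) : oadd a (oadd (oopp a) b) = b.
Proof. by rewrite oaddA oaddN oadd0l. Qed.
Lemma oadd_inj (a : 'I_m) : injective (oadd a).
Proof. by move=> x y /(congr1 (oadd (oopp a))); rewrite !oaddKl. Qed.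
Lemma ooppK (a : 'I_m) : oopp (oopp a) = a.
Proof. by apply: (@oadd_inj (oopp a)); rewrite oaddN oaddNl. Qed.
Lemma ooppD (a b : 'I_m) : oopp (oadd a b) = oadd (oopp a) (oopp b).
Proof.
apply: (@oadd_inj (oadd a b)); rewrite oaddN.
by rewrite [oadd a b]oaddC -oaddA oaddNKl oaddN.
Qed.
Lemma oopp0 : oopp z = z.
Proof. by apply: (@oadd_inj z); rewrite oaddN oadd0l. Qed.
Lemma oadd_eq (k a b : 'I_m) : (oadd k a == b) = (k == oadd b (oopp a)).
Proof.
apply/eqP/eqP => [<-|->]; first by rewrite -oaddA oaddN oadd0r.
by rewrite -oaddA oaddNl oadd0r.
Qed.
Lemma oaddN_eq (k a b : 'I_m) : (oadd (oopp k) a == b) = (k == oadd a (oopp b)).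
Proof.
rewrite oadd_eq; apply/eqP/eqP => [E|->].
  by rewrite -[k]ooppK E ooppD ooppK oaddC.
by rewrite ooppD ooppK oaddC.
Qed.
End Arith.

Section Walk.
Variables (n m : nat) (hm : 0 < m).
Local Notation pt := (point n m).
Local Notation z := (ozero hm).

Definition conf (Y : gsym n m) (l : 'I_n) : pt := gapp Y (l, z).

Definition updc (f : 'I_n -> pt) (s : step n m) : 'I_n -> pt := fun l =>
  if (l == s.1.2) || (l == s.1.1) then Defs.rot (oopp s.2) (f (tperm s.1.2 s.1.1 l))
  else f (tperm s.1.2 s.1.1 l).

Lemma conf1 Y l : (conf Y l).1 = Y.2 l. Proof. by []. Qed.

Lemma conf_rcons (w : seq (step n m)) s :
  conf (walkY hm (rcons w s)) =1 updc (conf (walkY hm w)) s.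
Proof.
move=> l; rewrite /walkY /walkX foldl_rcons.
set X := foldl _ _ w.
case: s => [[q i] k] /=.
rewrite /conf /gapp /ginv /gmul /updc /step_gen /gen /=.
rewrite invMg tpermV !ffunE /= !permM.
have -> : ozero (ord_pos k) = z by apply: val_inj.
set a := (X.2^-1)%g (tperm i q l).
have Ha : X.2 a = tperm i q l by rewrite /a permKV.
rewrite -/a Ha.
have Hl : (tperm i q l == i) || (tperm i q l == q) = (l == i) || (l == q).
  by case: tpermP => [->|->|/eqP/negbTE -> /eqP/negbTE ->]; rewrite ?eqxx ?orbT.
rewrite Hl; case: ifP => _ /=; rewrite /Defs.rot /=; congr (_, _).
  by rewrite !oadd0l ?ooppD; [exact: oaddC|].
by rewrite !oadd0l ?oopp0 ?oadd0r.
Qed.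
End Walk.

Local Open Scope ring_scope.

Lemma sum_eq1 (I : finType) (P : pred I) (i0 : I) :
  \sum_(i | P i) ((i == i0)%:R : rat) = (P i0)%:R.
Proof.
rewrite big_mkcond (bigD1 i0) //= eqxx big1 ?addr0; first by case: (P i0).
by move=> i /negbTE ->; case: (P i).
Qed.

Section Gen.
Variables (n m : nat) (hm : (0 < m)%N) (j : 'I_n).
Local Notation pt := (point n m).
Local Notation z := (ozero hm).

Definition Mt (f c : 'I_n -> pt) (v : pt) : bool :=
  [forall l : 'I_n, (j < l)%N ==> (f l == c l)] && (f j == v).
Definition valid (c : 'I_n -> pt) (v : pt) : bool :=
  [forall l : 'I_n, (j < l)%N ==> ((c l).1 != v.1)].

Lemma Mt_ext f g c v : f =1 g -> Mt f c v = Mt g c v.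
Proof. by move=> fg; rewrite /Mt fg; congr (_ && _); apply: eq_forallb => l; rewrite fg. Qed.

Lemma rotN_eq (k : 'I_m) (x y : pt) : (Defs.rot (oopp k) x == y) = (x == Defs.rot k y).
Proof.
case: x y => [x1 x2] [y1 y2]; rewrite /Defs.rot /= !xpair_eqE; congr (_ && _).
apply/eqP/eqP => [<-|->]; first by rewrite oaddA oaddN oadd0l.
by rewrite oaddA oaddNl oadd0l.
Qed.

Lemma sum_rotN (p v : pt) :
  \sum_(k : 'I_m) ((Defs.rot (oopp k) p == v)%:R : rat) = (p.1 == v.1)%:R.
Proof.
case: p v => [p1 p2] [v1 v2]; rewrite /Defs.rot /=.
rewrite (eq_bigr (fun k => ((p1 == v1) && (k == oadd p2 (oopp v2)))%:R)); last first.
  by move=> k _; rewrite xpair_eqE oaddN_eq.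
case: (p1 == v1) => /=; last by rewrite big1.
exact: (@sum_eq1 _ predT).
Qed.

Lemma sum_rot (u v : pt) :
  \sum_(k : 'I_m) ((u == Defs.rot k v)%:R : rat) = (u.1 == v.1)%:R.
Proof.
case: u v => [u1 u2] [v1 v2]; rewrite /Defs.rot /=.
rewrite (eq_bigr (fun k => ((u1 == v1) && (k == oadd u2 (oopp v2)))%:R)); last first.
  by move=> k _; rewrite xpair_eqE [u2 == _]eq_sym oadd_eq.
case: (u1 == v1) => /=; last by rewrite big1.
exact: (@sum_eq1 _ predT).
Qed.


Lemma tperm_mem (i q l : 'I_n) :
  (tperm i q l == i) || (tperm i q l == q) = (l == i) || (l == q).
Proof.
by case: tpermP => [->|->|/eqP/negbTE -> /eqP/negbTE ->]; rewrite ?eqxx ?orbT.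
Qed.

Lemma forall_split (R : 'I_n -> bool) (q : 'I_n) : (j < q)%N ->
  [forall l : 'I_n, (j < l)%N ==> R l] =
  [forall l : 'I_n, ((j < l)%N && (l != q)) ==> R l] && R q.
Proof.
move=> jq; apply/forallP/andP => [H|[/forallP H Hq] l].
  split; last exact: (implyP (H q) jq).
  by apply/forallP => l; apply/implyP => /andP [jl _]; exact: (implyP (H l) jl).
apply/implyP => jl; case: (eqVneq l q) => [->//|lq].
by apply: (implyP (H l)); rewrite jl lq.
Qed.

Lemma forall_reindex (tau : 'I_n -> 'I_n) (R : 'I_n -> bool) :
  involutive tau -> (forall l, (j < tau l)%N = (j < l)%N) ->
  [forall l : 'I_n, (j < l)%N ==> R (tau l)] = [forall l : 'I_n, (j < l)%N ==> R l].
Proof.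
move=> inv Hj; apply/forallP/forallP => H l; apply/implyP => jl.
  by rewrite -[l]inv; apply: (implyP (H (tau l))); rewrite Hj.
by apply: (implyP (H (tau l))); rewrite Hj.
Qed.

Lemma le_inv_valid (s : {perm 'I_n}) (x : 'I_n) :
  (((s^-1)%g x) <= j)%N = [forall l : 'I_n, (j < l)%N ==> (s l != x)].
Proof.
apply/idP/forallP => [H l|H].
  apply/implyP => jl; apply/eqP => E.
  by move: H; rewrite -E permK leqNgt jl.
rewrite leqNgt; apply/negP => jl.
by have := implyP (H _) jl; rewrite permKV eqxx.
Qed.

Lemma lt_inv_valid (s : {perm 'I_n}) (x : 'I_n) :
  (((s^-1)%g x) < j)%N = [forall l : 'I_n, (j <= l)%N ==> (s l != x)].
Proof.
apply/idP/forallP => [H l|H].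
  apply/implyP => jl; apply/eqP => E.
  by move: H; rewrite -E permK ltnNge jl.
rewrite ltnNge; apply/negP => jl.
by have := implyP (H _) jl; rewrite permKV eqxx.
Qed.

Lemma Mt_eq_ge f g c v : (forall l : 'I_n, (j <= l)%N -> f l = g l) ->
  Mt f c v = Mt g c v.
Proof.
move=> H; rewrite /Mt H //; congr (_ && _); apply: eq_forallb => l.
by case: (ltnP j l) => jl //=; rewrite H // ltnW.
Qed.

Lemma Mt_updc_lt f (q i : 'I_n) k c v : (q < j)%N -> (i <= q)%N ->
  Mt (updc f ((q, i), k)) c v = Mt f c v.
Proof.
move=> qj iq; apply: Mt_eq_ge => l jl; rewrite /updc /=.
have li : (l == i) = false by apply/negbTE; apply/eqP => E; move: jl; rewrite E leqNgt (leq_ltn_trans iq qj).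
have lq : (l == q) = false by apply/negbTE; apply/eqP => E; move: jl; rewrite E leqNgt qj.
by rewrite li lq tpermD // eq_sym ?li ?lq.
Qed.

Lemma Mt_updc_eq f (i : 'I_n) k c v : (i <= j)%N ->
  Mt (updc f ((j, i), k)) c v =
  [forall l : 'I_n, (j < l)%N ==> (f l == c l)] && (Defs.rot (oopp k) (f i) == v).
Proof.
move=> ij; rewrite /Mt /updc /= eqxx orbT tpermR; congr (_ && _).
apply: eq_forallb => l; case: (ltnP j l) => jl //=.
have li : (l == i) = false by apply/negbTE; apply/eqP => E; move: jl; rewrite E ltnNge ij.
have lj : (l == j) = false by apply/negbTE; apply/eqP => E; move: jl; rewrite E ltnn.
by rewrite li lj tpermD // eq_sym ?li ?lj.
Qed.

Lemma Mt_updc_gt f (q i : 'I_n) k c v : (j < i)%N -> (j < q)%N ->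
  Mt (updc f ((q, i), k)) c v = Mt f (updc c ((q, i), oopp k)) v.
Proof.
move=> ji jq; rewrite /Mt; congr (_ && _); last first.
  rewrite /updc /=.
  have ji' : (j == i) = false by apply/negbTE; apply/eqP => E; move: ji; rewrite E ltnn.
  have jq' : (j == q) = false by apply/negbTE; apply/eqP => E; move: jq; rewrite E ltnn.
  by rewrite ji' jq' tpermD // eq_sym ?ji' ?jq'.
rewrite -(@forall_reindex (tperm i q)); last 2 first.
- exact: tpermK.
- by move=> l; case: tpermP => [->|->|] //; rewrite ?ji ?jq.
apply: eq_forallb => l; congr (_ ==> _).
rewrite /updc /= tperm_mem tpermK ooppK.
case: ifP => _ //; rewrite ?rotN_eq //. exact: hm.
Qed.

Variables (A : finType) (om : A -> rat) (cf : A -> 'I_n -> pt) (sg : A -> {perm 'I_n}).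
Hypothesis Hsg : forall a l, (cf a l).1 = sg a l.

Definition Qg c v := \sum_(a : A) om a * (Mt (cf a) c v)%:R.
Definition Qs s c v := \sum_(a : A) om a * (Mt (updc (cf a) s) c v)%:R.

Lemma Mt_valid a c v : Mt (cf a) c v -> valid c v.
Proof.
case/andP => /forallP H /eqP <-; apply/forallP => l; apply/implyP => jl.
have /eqP <- := implyP (H l) jl.
rewrite !Hsg (inj_eq (@perm_inj _ _)); apply/eqP => E.
by move: jl; rewrite E ltnn.
Qed.

Lemma Qg_invalid c v : ~~ valid c v -> Qg c v = 0.
Proof.
move=> nv; apply: big1 => a _.
case E: (Mt (cf a) c v); last by rewrite mulr0.
by move: nv; rewrite (Mt_valid E).
Qed.


Lemma natr_andb (b1 b2 : bool) : ((b1 && b2)%:R : rat) = b1%:R * b2%:R.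
Proof. by case: b1; case: b2; rewrite ?mulr0 ?mulr1. Qed.

Lemma Qs_lt (q i : 'I_n) k c v : (q < j)%N -> (i <= q)%N -> Qs ((q, i), k) c v = Qg c v.
Proof. by move=> qj iq; apply: eq_bigr => a _; rewrite Mt_updc_lt. Qed.

Lemma Qs_gt (q i : 'I_n) k c v : (j < i)%N -> (j < q)%N ->
  Qs ((q, i), k) c v = Qg (updc c ((q, i), oopp k)) v.
Proof. by move=> ji jq; apply: eq_bigr => a _; rewrite Mt_updc_gt. Qed.

Lemma valid_updc c (q i : 'I_n) k v : (j < i)%N -> (j < q)%N ->
  valid (updc c ((q, i), k)) v = valid c v.
Proof.
move=> ji jq; rewrite /valid -(@forall_reindex (tperm i q)); last 2 first.
- exact: tpermK.
- by move=> l; case: tpermP => [->|->|] //; rewrite ?ji ?jq.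
apply: eq_forallb => l; rewrite /updc /= tpermK.
by case: ifP.
Qed.

Lemma Qs_eq_sum c v :
  \sum_(i : 'I_n | (i <= j)%N) \sum_(k : 'I_m) Qs ((j, i), k) c v =
  (valid c v)%:R * \sum_(a : A) om a * ([forall l : 'I_n, (j < l)%N ==> (cf a l == c l)])%:R.
Proof.
rewrite /Qs (eq_bigr (fun i => \sum_a \sum_k om a * (Mt (updc (cf a) ((j,i),k)) c v)%:R));
  last by move=> i _; rewrite exchange_big.
rewrite exchange_big mulr_sumr; apply: eq_bigr => a _.
set P := [forall l : 'I_n, _].
rewrite (eq_bigr (fun i => om a * P%:R * ((i == ((sg a)^-1)%g v.1))%:R)); last first.
  move=> i ij; under eq_bigr => k _ do rewrite Mt_updc_eq // natr_andb mulrA.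
  rewrite -mulr_sumr sum_rotN Hsg; congr (_ * _%:R).
  by rewrite (can2_eq (permK (sg a)) (permKV (sg a))).
rewrite -mulr_sumr sum_eq1 [RHS]mulrC.
case HP: P; last by rewrite /= !mulr0 !mul0r.
rewrite le_inv_valid /valid; congr (_ * _%:R); congr (nat_of_bool _).
apply/forallP/forallP => H l; apply/implyP => jl; have := implyP (H l) jl;
  by have /eqP <- := implyP (forallP HP l) jl; rewrite Hsg.
Qed.

Definition cupd (c : 'I_n -> pt) (q : 'I_n) (u : pt) : 'I_n -> pt :=
  fun l => if l == q then u else c l.
Definition alpha (c : 'I_n -> pt) (q : 'I_n) : bool :=
  [forall l : 'I_n, ((j < l)%N && (l != q)) ==> ((c l).1 != (c q).1)].

Lemma Mt_updc_ltj f (q i : 'I_n) k c v : (i < j)%N -> (j < q)%N ->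
  Mt (updc f ((q, i), k)) c v =
  [&& [forall l : 'I_n, ((j < l)%N && (l != q)) ==> (f l == c l)],
      Defs.rot (oopp k) (f i) == c q & f j == v].
Proof.
move=> ij jq; rewrite /Mt (forall_split _ jq) -andbA; congr (_ && (_ && _)).
- apply: eq_forallb => l; case: (ltnP j l) => jl //=; case: (eqVneq l q) => lq //=.
  have li : (l == i) = false.
    by apply/negbTE; apply/eqP => E; move: jl; rewrite E ltnNge (ltnW ij).
  by rewrite /updc /= li (negbTE lq) tpermD // eq_sym ?li // lq.
- by rewrite /updc /= eqxx orbT tpermR.
- have ji : (j == i) = false by apply/negbTE; apply/eqP => E; move: ij; rewrite E ltnn.
  have jq' : (j == q) = false by apply/negbTE; apply/eqP => E; move: jq; rewrite E ltnn.
  by rewrite /updc /= ji jq' tpermD // eq_sym ?ji ?jq'.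
Qed.

Lemma Mt_cupd f (q : 'I_n) u c v : (j < q)%N ->
  Mt f (cupd c q u) v =
  [&& [forall l : 'I_n, ((j < l)%N && (l != q)) ==> (f l == c l)], f q == u & f j == v].
Proof.
move=> jq; rewrite /Mt (forall_split _ jq) -andbA /cupd eqxx; congr (_ && _).
apply: eq_forallb => l; case: (ltnP j l) => jl //=; case: (eqVneq l q) => lq //=.
Qed.

Lemma Mt_updc_jq f (q : 'I_n) k c v : (j < q)%N ->
  Mt (updc f ((q, j), k)) c v = Mt f (cupd c q (Defs.rot k v)) (Defs.rot k (c q)).
Proof.
move=> jq; rewrite Mt_cupd // /Mt (forall_split _ jq) -andbA; congr (_ && _).
  apply: eq_forallb => l; case: (ltnP j l) => jl //=; case: (eqVneq l q) => lq //=.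
  have lj : (l == j) = false by apply/negbTE; apply/eqP => E; move: jl; rewrite E ltnn.
  by rewrite /updc /= lj (negbTE lq) tpermD // eq_sym ?lj // lq.
rewrite /updc /= !eqxx /= orbT tpermR tpermL !rotN_eq // andbC //; exact: hm.
Qed.

Lemma valid_rot c k x : valid c (Defs.rot k x) = valid c x.
Proof. by []. Qed.

Lemma sum_pred1 (G : pt -> rat) x : \sum_(u : pt) (u == x)%:R * G u = G x.
Proof.
rewrite (bigD1 x) //= eqxx mul1r big1 ?addr0 //.
by move=> u /negbTE ->; rewrite mul0r.
Qed.

Lemma sum_rot_pred (G : pt -> rat) v :
  \sum_(k : 'I_m) G (Defs.rot k v) = \sum_(u : pt | u.1 == v.1) G u.
Proof.
rewrite [RHS]big_mkcond /=.
rewrite [RHS](eq_bigr (fun u => \sum_k (u == Defs.rot k v)%:R * G u)); last first.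
  by move=> u _; rewrite -mulr_suml sum_rot; case: (u.1 == v.1); rewrite ?mul1r ?mul0r.
by rewrite exchange_big; apply: eq_bigr => k _; rewrite sum_pred1.
Qed.

Lemma QsA c v (q : 'I_n) : (j < q)%N -> valid c v ->
  \sum_(i : 'I_n | (i < j)%N) \sum_(k : 'I_m) Qs ((q, i), k) c v =
  (alpha c q)%:R * \sum_(u : pt | u.1 != (c q).1) Qg (cupd c q u) v.
Proof.
move=> jq vv.
rewrite /Qs (eq_bigr (fun i => \sum_a \sum_k om a * (Mt (updc (cf a) ((q,i),k)) c v)%:R));
  last by move=> i _; rewrite exchange_big.
rewrite /Qg [RHS]mulr_sumr.
rewrite [RHS](eq_bigr (fun u => \sum_a (alpha c q)%:R * (om a * (Mt (cf a) (cupd c q u) v)%:R)));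
  last by move=> u _; rewrite mulr_sumr.
rewrite [RHS]exchange_big [LHS]exchange_big; apply: eq_bigr => a _.
pose P := [forall l : 'I_n, ((j < l)%N && (l != q)) ==> (cf a l == c l)].
rewrite (eq_bigr (fun i => om a * (P && (cf a j == v))%:R * ((i == ((sg a)^-1)%g (c q).1))%:R)); last first.
  move=> i ij; under eq_bigr => k _ do rewrite Mt_updc_ltj // andbCA natr_andb mulrCA.
  rewrite -mulr_suml sum_rotN Hsg mulrC; congr (_ * _%:R).
  by rewrite (can2_eq (permK (sg a)) (permKV (sg a))).
rewrite -mulr_sumr sum_eq1.
rewrite [RHS](eq_bigr (fun u => (alpha c q)%:R * om a * (P && (cf a j == v))%:R * (u == cf a q)%:R)); last first.
  by move=> u _; rewrite Mt_cupd // [cf a q == u]eq_sym andbCA andbC natr_andb !mulrA.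
rewrite -[RHS]mulr_sumr (sum_eq1 (fun u : pt => u.1 != (c q).1)).
rewrite [_%:R * om a]mulrC -!mulrA; congr (om a * _).
have HPdef : P = [forall l : 'I_n, ((j < l)%N && (l != q)) ==> (cf a l == c l)] by [].
clearbody P; case: P HPdef => HPdef /=; last by rewrite !mul0r mulr0.
have HP : [forall l : 'I_n, ((j < l)%N && (l != q)) ==> (cf a l == c l)] by rewrite -HPdef.
case: (eqVneq (cf a j) v) => [Ej|]; last by rewrite !mul0r mulr0.
rewrite !mul1r -natr_andb; congr (_%:R); congr (nat_of_bool _).
rewrite lt_inv_valid; apply/forallP/andP => [H|[Ha Hq] l].
  split; last by rewrite Hsg; exact: (implyP (H q) (ltnW jq)).
  apply/forallP => l; apply/implyP => /andP [jl lq].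
  have /eqP <- := implyP (forallP HP l) (introT andP (conj jl lq)).
  by rewrite Hsg; exact: (implyP (H l) (ltnW jl)).
apply/implyP => jl; rewrite -Hsg.
case: (eqVneq l j) => [->|lj].
  rewrite Ej eq_sym; exact: (implyP (forallP vv q) jq).
have jl' : (j < l)%N by rewrite ltn_neqAle eq_sym lj jl.
case: (eqVneq l q) => [->//|lq].
have /eqP -> := implyP (forallP HP l) (introT andP (conj jl' lq)).
exact: (implyP (forallP Ha l) (introT andP (conj jl' lq))).
Qed.

Lemma valid_cupd c (q : 'I_n) u x : (j < q)%N ->
  valid (cupd c q u) x =
  [forall l : 'I_n, ((j < l)%N && (l != q)) ==> ((c l).1 != x.1)] && (u.1 != x.1).
Proof.
move=> jq; rewrite /valid (forall_split _ jq) /cupd eqxx; congr (_ && _).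
by apply: eq_forallb => l; case: (ltnP j l) => jl //=; case: (eqVneq l q) => lq.
Qed.

Lemma Qs_gtj c v (q : 'I_n) : (j < q)%N ->
  (forall c v v', valid c v -> valid c v' -> Qg c v = Qg c v') -> valid c v ->
  \sum_(i : 'I_n | (i <= j)%N) \sum_(k : 'I_m) Qs ((q, i), k) c v =
  (alpha c q)%:R * \sum_(u : pt | u.1 != (c q).1) Qg (cupd c q u) (c q).
Proof.
move=> jq IH vv.
rewrite (bigD1 j) //= (eq_bigl (fun i : 'I_n => (i < j)%N)); last first.
  by move=> i; rewrite ltn_neqAle andbC.
rewrite QsA //.
rewrite (eq_bigr (fun k => Qg (cupd c q (Defs.rot k v)) (Defs.rot k (c q)))); last first.
  by move=> k _; apply: eq_bigr => a _; rewrite Mt_updc_jq.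
have vq : (c q).1 != v.1 := implyP (forallP vv q) jq.
have [Ha|Ha] := boolP (alpha c q); last first.
  rewrite /= !mul0r addr0 big1 // => k _; apply: Qg_invalid.
  move: Ha; rewrite /alpha negb_forall => /existsP [l]; rewrite negb_imply => /andP [/andP [jl lq] /negPn /eqP E].
  rewrite valid_rot valid_cupd // negb_and; apply/orP; left.
  rewrite negb_forall; apply/existsP; exists l; rewrite jl lq /= E.
  by rewrite eqxx.
have -> : (true%:R : rat) = 1 by [].
rewrite !mul1r.
rewrite (eq_bigr (fun k => Qg (cupd c q (Defs.rot k v)) (c q))); last first.
  move=> k _; apply: IH; rewrite ?valid_rot valid_cupd // eq_sym vq andbT //.
rewrite (sum_rot_pred (fun u => Qg (cupd c q u) (c q))).
rewrite [X in _ + X = _](bigID (fun u : pt => u.1 == v.1)) /=.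
rewrite [X in _ = X](bigID (fun u : pt => u.1 == v.1)) /=.
rewrite [X in _ + (X + _) = _]big1; last first.
  move=> u /andP [_ /eqP uv]; apply: Qg_invalid.
  by rewrite valid_cupd // uv eqxx andbF.
rewrite add0r; congr (_ + _).
  apply: eq_bigl => u; case: (eqVneq u.1 v.1) => [->|]; rewrite ?andbT ?andbF //.
  by rewrite eq_sym.
apply: eq_bigr => u /andP [ub uv]; apply: IH => //.
  rewrite valid_cupd // uv andbT; apply/forallP => l; apply/implyP => /andP [jl _].
  exact: (implyP (forallP vv l) jl).
by rewrite valid_cupd // ub andbT; exact: Ha.
Qed.
End Gen.

Lemma theadE (T : Type) t (u : (t.+1).-tuple T) : thead u :: behead u = u.
Proof. by case: u => [[|x r] H]. Qed.

Lemma sum_tuple_rcons (T : finType) t (F : (t.+1).-tuple T -> rat) :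
  \sum_(w : (t.+1).-tuple T) F w = \sum_(w : t.-tuple T) \sum_(s : T) F (rcons_tuple w s).
Proof.
rewrite pair_big /=.
pose h (p : t.-tuple T * T) := rcons_tuple p.1 p.2.
pose g (w : (t.+1).-tuple T) : t.-tuple T * T :=
  (belast_tuple (thead w) (behead_tuple w), last (thead w) (behead w)).
rewrite (reindex h) /=; last first.
  exists g => [[w s] _|w _].
    rewrite /g /h /=; congr (_, _).
      apply: val_inj => /=.
      have E := theadE (rcons_tuple w s).
      by move: E; rewrite lastI => /rcons_inj [].
    have E := theadE (rcons_tuple w s).
    by move: E; rewrite lastI => /rcons_inj [].
  by apply: val_inj; rewrite /g /h /= -lastI theadE.
by apply: eq_bigr => [[w s]].
Qed.

Section Main.
Variables (n m : nat) (hm : (0 < m)%N) (j : 'I_n).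
Local Notation pt := (point n m).
Local Notation stp := (step n m).

Definition hasj (w : seq stp) := has (fun s : stp => s.1.1 == j) w.
Definition omE t (w : t.-tuple stp) : rat := if hasj w then path_weight w else 0.
Definition omN t (w : t.-tuple stp) : rat := if hasj w then 0 else path_weight w.
Definition cfw t (w : t.-tuple stp) := conf hm (walkY hm w).
Definition sgw t (w : t.-tuple stp) := (walkY hm w).2.
Lemma Hsgw t w l : (@cfw t w l).1 = sgw w l. Proof. by []. Qed.

Definition Q t := Qg j (@omE t) (@cfw t).

Lemma Q_step t c v :
  Q t.+1 c v = \sum_(s : stp) step_weight s *
     (Qs j (@omE t) (@cfw t) s c v + (s.1.1 == j)%:R * Qs j (@omN t) (@cfw t) s c v).
Proof.
rewrite /Q /Qg sum_tuple_rcons.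
rewrite [RHS](eq_bigr (fun s : stp => \sum_(w : t.-tuple stp) step_weight s * (omE w * (Mt j (updc (cfw w) s) c v)%:R +
   (s.1.1 == j)%:R * (omN w * (Mt j (updc (cfw w) s) c v)%:R)))); last first.
  by move=> s _; rewrite /Qs -mulr_sumr big_split /= -mulr_sumr.
rewrite [RHS]exchange_big; apply: eq_bigr => w _; apply: eq_bigr => s _.
rewrite (@Mt_ext n m j (cfw (rcons_tuple w s)) (updc (cfw w) s)); last first.
  by move=> l; rewrite /cfw /= conf_rcons.
rewrite /omE /omN /hasj /= has_rcons /path_weight big_rcons /=.
by case: (s.1.1 == j); case: (has _ w) => /=; ring.
Qed.

Lemma sum_step (F : stp -> rat) :
  \sum_(s : stp) F s = \sum_(q : 'I_n) \sum_(i : 'I_n) \sum_(k : 'I_m) F ((q, i), k).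
Proof.
transitivity (\sum_(p : 'I_n * 'I_n) \sum_(k : 'I_m) F (p, k)).
  by rewrite [RHS]pair_big /=; apply: eq_bigr => [[p k]].
by rewrite [RHS]pair_big /=; apply: eq_bigr => [[q i]].
Qed.

Lemma Q0 c v : Q 0 c v = 0.
Proof.
apply: big1 => w _; rewrite /omE.
by case: w => [[|s w'] H] //=; rewrite mul0r.
Qed.

Lemma Q_inv t c v v' : valid j c v -> valid j c v' -> Q t c v = Q t c v'.
Proof.
elim: t c v v' => [|t IH] c v v' vv vv'; first by rewrite !Q0.
have Hs := @Hsgw t.
rewrite !Q_step !sum_step; apply: eq_bigr => q _.
have step_sum : forall v0, \sum_(i : 'I_n) \sum_(k : 'I_m) step_weight ((q, i), k) *
   (Qs j (@omE t) (@cfw t) ((q, i), k) c v0 +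
    (((q, i), k).1.1 == j)%:R * Qs j (@omN t) (@cfw t) ((q, i), k) c v0) =
  (1 / (n * q.+1 * m)%:R) *
  (\sum_(i : 'I_n | (i <= q)%N) \sum_(k : 'I_m) Qs j (@omE t) (@cfw t) ((q, i), k) c v0 +
   (q == j)%:R * \sum_(i : 'I_n | (i <= q)%N) \sum_(k : 'I_m) Qs j (@omN t) (@cfw t) ((q, i), k) c v0).
  move=> v0.
  rewrite (bigID (fun i : 'I_n => (i <= q)%N)) /= [X in _ + X]big1 ?addr0; last first.
    by move=> i /negbTE iq; rewrite big1 // => k _; rewrite /step_weight /= iq mul0r.
  rewrite [X in _ = _ * (_ + X)]mulr_sumr -big_split /= mulr_sumr.
  apply: eq_bigr => i iq; rewrite /step_weight /= iq -mulr_sumr; congr (_ * _).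
  by rewrite big_split /= -mulr_sumr.
rewrite !step_sum; congr (_ * _).
have IHQ : forall c v v', valid j c v -> valid j c v' ->
    Qg j (@omE t) (@cfw t) c v = Qg j (@omE t) (@cfw t) c v' by exact: IH.
case: (ltngtP q j) => [qj|jq|qj].
- have -> : (q == j) = false by apply/negbTE; apply/eqP => E; move: qj; rewrite E ltnn.
  rewrite !mul0r !addr0; apply: eq_bigr => i iq; apply: eq_bigr => k _.
  by rewrite !Qs_lt //; exact: IHQ.
- have -> : (q == j) = false by apply/negbTE; apply/eqP => E; move: jq; rewrite E ltnn.
  rewrite !mul0r !addr0.
  rewrite (bigID (fun i : 'I_n => (i <= j)%N)) [RHS](bigID (fun i : 'I_n => (i <= j)%N)) /=.
  have Hl : forall i : 'I_n, ((i <= q)%N && (i <= j)%N) = (i <= j)%N.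
    by move=> i; case: (leqP i j) => ij; rewrite ?andbF ?andbT // (leq_trans ij (ltnW jq)).
  rewrite !(eq_bigl _ _ Hl) !(Qs_gtj hm Hs) //; congr (_ + _).
  apply: eq_bigr => i /andP [iq]; rewrite -ltnNge => ji; apply: eq_bigr => k _.
  rewrite !(Qs_gt hm) //; apply: IHQ; rewrite valid_updc //.
- have qj' : q = j by apply: val_inj.
  subst q; rewrite eqxx !(Qs_eq_sum hm j _ Hs) vv vv' //.
Qed.
End Main.

Section Fin.
Variables (n m : nat) (hm : (0 < m)%N) (j : 'I_n).
Local Notation pt := (point n m).

Lemma Gset_valid (y : {ffun 'I_n -> pt}) x : (x \in Gset j y) = valid j y x.
Proof.
rewrite inE; apply/forallP/forallP => H i.
  apply/implyP => ji; apply/negP => /eqP E.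
  have := H i; move/forallP/(_ (oadd x.2 (oopp (y i).2))); rewrite ji /= => /eqP; apply.
  by rewrite /Defs.rot -oaddA oaddNl oadd0r E -surjective_pairing.
apply/forallP => k; apply/implyP => ji; apply/eqP => E.
by move: (implyP (H i) ji); rewrite E /Defs.rot /= eqxx.
Qed.

Lemma sum_le_ord : \sum_(i < n) (((i <= j)%N)%:R : rat) = (j.+1)%:R.
Proof.
rewrite -(big_mkord xpredT (fun i => (((i <= j)%N)%:R : rat))).
rewrite (@big_cat_nat _ _ _ j.+1 0 n _ _ (leq0n _) (ltn_ord j)) /=.
rewrite [X in _ + X]big_nat_cond [X in _ + X]big1 ?addr0; last first.
  by move=> i /andP [/andP [ji _] _]; rewrite leqNgt ji.
rewrite big_nat_cond (eq_bigr (fun _ => 1)); last first.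
  by move=> i /andP [/andP [_ ij] _]; rewrite -ltnS ij.
by rewrite -big_nat_cond sumr_const_nat subn0.
Qed.
End Fin.

Theorem proposition4p6 (n m : nat) (hm : (0 < m)%N) (t : nat) (j : 'I_n)
    (y : {ffun 'I_n -> point n m}) (x : point n m) :
  let C := fun w : t.-tuple (step n m) =>
    ((hitT j w <= t)%N &&
     [forall i : 'I_n, (j < i)%N ==> (gapp (walkY hm w) (i, ozero hm) == y i)]) in
  0 < Prob C ->
  Prob (fun w => C w && (gapp (walkY hm w) (j, ozero hm) == x)) / Prob C =
  (if x \in Gset j y then 1 / (m * (j.+1))%:R else 0).
Proof.
move=> C HC.
have Hs := @Hsgw n m hm t.
have HP : forall x', Prob (fun w => C w && (gapp (walkY hm w) (j, ozero hm) == x')) = Q hm j t y x'.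
  move=> x'; rewrite /Prob /Q /Qg big_mkcond; apply: eq_bigr => w _.
  rewrite /C; have -> : (hitT j w <= t)%N = hasj j w.
    by rewrite /hitT /hasj has_find size_tuple.
  rewrite /omE /Mt /cfw /conf.
  case: (hasj j w) => /=; last by rewrite mul0r.
  by case: (_ && _) => /=; rewrite ?mulr1 ?mulr0.
have HPC : Prob C = \sum_(x' : point n m) Q hm j t y x'.
  rewrite -(eq_bigr _ (fun x' _ => HP x')) /Prob.
  under [RHS]eq_bigr => x' _ do rewrite big_mkcond.
  rewrite [RHS]exchange_big big_mkcond; apply: eq_bigr => w _ /=.
  case: (C w) => /=; last by rewrite big1.
  rewrite (bigD1 (gapp (walkY hm w) (j, ozero hm))) //= eqxx big1 ?addr0 //.
  by move=> x' /negbTE; rewrite eq_sym => ->.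
rewrite (@Gset_valid n m hm j y x); case: ifP => vx; last first.
  by rewrite HP /Q (Qg_invalid _ Hs) ?vx // mul0r.
have Q' : forall x', Q hm j t y x' = (valid j y x')%:R * Q hm j t y x.
  move=> x'; case vx': (valid j y x').
    by rewrite mul1r (Q_inv hm t vx' vx).
  by rewrite mul0r /Q (Qg_invalid _ Hs) ?vx'.
have HPN : Prob C = (\sum_(x' : point n m) ((valid j y x')%:R : rat)) * Q hm j t y x.
  by rewrite HPC mulr_suml; apply: eq_bigr => x' _; rewrite Q'.
have HN : \sum_(x' : point n m) ((valid j y x')%:R : rat) = (m * j.+1)%:R.
  case: (pickP C) => [w0 Cw0|C0]; last first.
    by move: HC; rewrite /Prob big_pred0 // ltxx.
  have Hy : forall l : 'I_n, (j < l)%N -> y l = cfw hm w0 l.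
    move: Cw0 => /andP [_ /forallP H] l jl.
    by apply/esym/eqP; exact: (implyP (H l) jl).
  have Hv : forall x' : point n m, valid j y x' = (((sgw hm w0)^-1)%g x'.1 <= j)%N.
    move=> x'; rewrite le_inv_valid /valid; apply/forallP/forallP => H l;
      apply/implyP => jl; have := implyP (H l) jl; by rewrite Hy // Hs.
  under eq_bigr => x' _ do rewrite Hv.
  transitivity (\sum_(p : 'I_n) \sum_(e : 'I_m) ((((sgw hm w0)^-1)%g p <= j)%N)%:R : rat).
    by rewrite [RHS]pair_big /=; apply: eq_bigr => [[p e]].
  under eq_bigr => p _ do rewrite sumr_const card_ord.
  rewrite (reindex_inj (@perm_inj _ (sgw hm w0))) /=.
  under eq_bigr => i _ do rewrite permK.
  by rewrite sumrMnl sum_le_ord [RHS]natrM mulrC mulr_natr.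
rewrite HP HPN HN.
have HQ : Q hm j t y x != 0.
  apply/eqP => E; move: HC; by rewrite HPN E mulr0 ltxx.
have HNz : ((m * j.+1)%:R : rat) != 0 by rewrite pnatr_eq0 muln_eq0 negb_or -lt0n hm.
by rewrite invfM mulrCA divff // mulr1 mul1r.
Qed.
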